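(* Let $Y=\left(\sum_{n=1}^\infty\ell_\infty^n\right)_{\ell_2}$. Then every finite subset $F$ of $T^\omega_\omega$ satisfies $c_Y(F)=1$ (in particular $T^\omega_\omega$ is crudely finitely representable in $Y$), but $T^\omega_\omega$ admits no bi-Lipschitz embedding into $Y$.
   Context: $\left(\sum_{n=1}^\infty\ell_\infty^n\right)_{\ell_2}$ is the Banach space of sequences $(x_n)_{n\ge1}$ with $x_n\in\ell_\infty^n$ (the space $\mathbb R^n$ with the max norm) and $\|(x_n)\|=(\sum_n\|x_n\|_\infty^2)^{1/2}<\infty$. $T^\omega_\omega$ is the rooted tree in which every vertex has countably infinitely many children, with the unweighted shortest-path metric. A metric space $X$ is $\lambda$-finitely representable in $Y$ if $c_Y(F)\le\lambda$ for every finite $F\subset X$, and crudely finitely representable if this holds for some $\lambda\in[1,\infty)$; here $c_Y(M):=\inf\{\mathrm{Lip}(f)\mathrm{Lip}(f^{-1}): f\colon M\to Y\text{ injective}\}$. *)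

(* Defs.v *)
From Stdlib Require Import Reals Lra List ClassicalEpsilon.
Import ListNotations.
Open Scope R_scope.

(* A vertex is the finite sequence of child-indices along the path from the
   root (root = []); the children of s are s ++ [n], n : nat. *)
Definition vertex := list nat.

Fixpoint common_prefix_len (s t : vertex) : nat :=
  match s, t with
  | a :: s', b :: t' => if Nat.eqb a b then S (common_prefix_len s' t') else O
  | _, _ => O
  end.

Definition dT (s t : vertex) : R :=
  INR (length s + length t - 2 * common_prefix_len s t)%nat.

(* An element is x : nat -> nat -> R; block x n (n = 0,1,2,...) is the vector
   (x n 0, ..., x n n) of l_inf^(n+1), i.e. block index n corresponds to the
   space l_inf^(n+1) of the paper. *)
Definition seqY := nat -> nat -> R.

Fixpoint maxabs (v : nat -> R) (m : nat) : R :=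
  match m with
  | O => Rabs (v O)
  | S m' => Rmax (maxabs v m') (Rabs (v m))
  end.

Definition blocknorm (x : seqY) (n : nat) : R := maxabs (x n) n.

Definition inY (x : seqY) : Prop :=
  (forall n k, (n < k)%nat -> x n k = 0) /\
  exists l, infinite_sum (fun n => (blocknorm x n) ^ 2) l.

Definition subY (x y : seqY) : seqY := fun n k => x n k - y n k.

(* ||x||_Y = (sum_n ||x_n||_inf^2)^(1/2) (meaningful for x in Y) *)
Definition normY (x : seqY) : R :=
  sqrt (epsilon (inhabits 0)
          (fun l => infinite_sum (fun n => (blocknorm x n) ^ 2) l)).

Definition dY (x y : seqY) : R := normY (subY x y).

Definition is_glb (E : R -> Prop) (m : R) : Prop :=
  (forall x, E x -> m <= x) /\ (forall b, (forall x, E x -> b <= x) -> b <= m).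

Definition lub_of (E : R -> Prop) : R := epsilon (inhabits 0) (is_lub E).

Definition InjOn (F : list vertex) (f : vertex -> seqY) : Prop :=
  forall s t, In s F -> In t F -> f s = f t -> s = t.

Definition LipF (F : list vertex) (f : vertex -> seqY) : R :=
  lub_of (fun r => exists s t, In s F /\ In t F /\ s <> t /\
                               r = dY (f s) (f t) / dT s t).

Definition LipInvF (F : list vertex) (f : vertex -> seqY) : R :=
  lub_of (fun r => exists s t, In s F /\ In t F /\ s <> t /\
                               r = dT s t / dY (f s) (f t)).

Definition distortions (F : list vertex) : R -> Prop :=
  fun c => exists f : vertex -> seqY,
      (forall s, In s F -> inY (f s)) /\ InjOn F f /\
      c = LipF F f * LipInvF F f.

Definition cY_is (F : list vertex) (c : R) : Prop := is_glb (distortions F) c.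

Definition biLip_embeds_tree_in_Y : Prop :=
  exists (f : vertex -> seqY) (A B : R), 0 < A /\ 0 < B /\
    (forall s, inY (f s)) /\
    forall s t, A * dT s t <= dY (f s) (f t) <= B * dT s t.

(* Main.v *)
Require Import Defs.
From Stdlib Require Import Reals Lra Lia List ClassicalEpsilon Classical FunctionalExtensionality.
Import ListNotations.
Open Scope R_scope.

Fixpoint ssum (g : nat -> R) (K : nat) : R :=
  match K with O => 0 | S K' => ssum g K' + g K' end.

Lemma ssum_ext g h K : (forall b, (b < K)%nat -> g b = h b) -> ssum g K = ssum h K.
Proof. induction K; simpl; intros H; [reflexivity|]. rewrite IHK by (intros; apply H; lia). rewrite H by lia; reflexivity. Qed.

Lemma ssum_le g h K : (forall b, (b<K)%nat -> g b <= h b) -> ssum g K <= ssum h K.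
Proof. induction K; simpl; intros H; [lra|]. assert (ssum g K <= ssum h K) by (apply IHK; intros; apply H; lia). assert (g K <= h K) by (apply H; lia). lra. Qed.

Lemma ssum_nonneg g K : (forall b, 0 <= g b) -> 0 <= ssum g K.
Proof. intros H; induction K; simpl; [lra|]. specialize (H K); lra. Qed.

Lemma ssum_mono g K K' : (forall b, 0 <= g b) -> (K <= K')%nat -> ssum g K <= ssum g K'.
Proof. intros H Hk; induction Hk; [lra|]. simpl. specialize (H m); lra. Qed.

Lemma ssum_sumf g n : sum_f_R0 g n = ssum g (S n).
Proof. induction n; simpl; [lra|]. simpl in IHn. rewrite IHn; reflexivity. Qed.

Lemma ssum_const_bound g K c : (forall b, (b<K)%nat -> g b <= c) -> ssum g K <= INR K * c.
Proof. induction K; cbn [ssum]; intros H; [simpl; lra|]. assert (ssum g K <= INR K * c) by (apply IHK; intros; apply H; lia).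
  assert (g K <= c) by (apply H; lia). rewrite S_INR; lra. Qed.

Lemma ssum_scal c g K : ssum (fun b => c * g b) K = c * ssum g K.
Proof. induction K; simpl; [ring|]. rewrite IHK; ring. Qed.

Lemma ssum_mask0 h N K : (K <= N)%nat -> ssum (fun b => if (b <? N)%nat then 0 else h b) K = 0.
Proof. induction K; simpl; intros; [reflexivity|]. rewrite IHK by lia.
  replace (K <? N)%nat with true by (symmetry; apply Nat.ltb_lt; lia). ring. Qed.

Lemma ssum_split h N K : (N <= K)%nat -> ssum h K = ssum h N + ssum (fun b => if (b <? N)%nat then 0 else h b) K.
Proof. induction K; intros Hk.
  - assert (N = 0%nat) by lia; subst; simpl; ring.
  - destruct (Nat.eq_dec N (S K)) as [->|Hn].
    + rewrite ssum_mask0 by lia. ring.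
    + simpl. rewrite IHK by lia. replace (K <? N)%nat with false by (symmetry; apply Nat.ltb_ge; lia). ring.
Qed.

Lemma sqrt_le_sq x y : 0 <= y -> x <= y ^ 2 -> sqrt x <= y.
Proof. intros Hy H. rewrite <- (sqrt_pow2 y Hy). apply sqrt_le_1_alt; exact H. Qed.

Lemma sq_le_of_sqrt x y : 0 <= x -> sqrt x <= y -> x <= y ^ 2.
Proof. intros Hx H. assert (0 <= sqrt x) by apply sqrt_pos.
  pose proof (sqrt_sqrt x Hx). nra. Qed.

Lemma cs2 a c u v P Q : 0 <= P -> 0 <= Q -> P^2 = a^2 + u^2 -> Q^2 = c^2 + v^2 -> a*c + u*v <= P*Q.
Proof. intros HP HQ H1 H2.
  assert ((a*c+u*v)^2 <= (P*Q)^2). { replace ((P*Q)^2) with (P^2*Q^2) by ring. rewrite H1, H2.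
     assert (0 <= (a*v - u*c)^2) by apply pow2_ge_0. nra. }
  assert (0 <= P*Q) by nra.
  destruct (Rle_or_lt (a*c+u*v) (P*Q)); [auto|]. nra. Qed.

Lemma mink u v K : sqrt (ssum (fun b => (u b + v b)^2) K) <= sqrt (ssum (fun b => u b ^2) K) + sqrt (ssum (fun b => v b^2) K).
Proof.
  induction K; cbn [ssum].
  - rewrite sqrt_0; lra.
  - set (SW := ssum (fun b => (u b + v b)^2) K) in *.
    set (SU := ssum (fun b => u b ^2) K) in *.
    set (SV := ssum (fun b => v b ^2) K) in *.
    assert (HW: 0 <= SW) by (apply ssum_nonneg; intros; apply pow2_ge_0).
    assert (HU: 0 <= SU) by (apply ssum_nonneg; intros; apply pow2_ge_0).
    assert (HV: 0 <= SV) by (apply ssum_nonneg; intros; apply pow2_ge_0).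
    set (a := sqrt SU). set (c := sqrt SV).
    assert (Ha: 0 <= a) by apply sqrt_pos. assert (Hc: 0 <= c) by apply sqrt_pos.
    assert (HSW: SW <= (a + c)^2) by (apply sq_le_of_sqrt; auto).
    assert (ea: SU = a^2) by (unfold a; rewrite <- Rsqr_pow2; rewrite Rsqr_sqrt; auto).
    assert (ec: SV = c^2) by (unfold c; rewrite <- Rsqr_pow2; rewrite Rsqr_sqrt; auto).
    set (P := sqrt (SU + u K ^2)). set (Q := sqrt (SV + v K ^2)).
    assert (HP: 0 <= P) by apply sqrt_pos. assert (HQ: 0 <= Q) by apply sqrt_pos.
    assert (eP: P^2 = a^2 + u K^2). { unfold P. rewrite <- Rsqr_pow2, Rsqr_sqrt; [lra|]. pose proof (pow2_ge_0 (u K)); lra. }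
    assert (eQ: Q^2 = c^2 + v K^2). { unfold Q. rewrite <- Rsqr_pow2, Rsqr_sqrt; [lra|]. pose proof (pow2_ge_0 (v K)); lra. }
    pose proof (cs2 a c (u K) (v K) P Q HP HQ eP eQ).
    apply sqrt_le_sq; [lra|].
    replace ((P+Q)^2) with (P^2 + Q^2 + 2*(P*Q)) by ring. rewrite eP, eQ.
    replace ((a+c)^2) with (a^2+c^2+2*(a*c)) in HSW by ring.
    replace ((u K + v K)^2) with (u K^2 + v K^2 + 2*(u K * v K)) by ring. lra.
Qed.

Lemma ssq_tri w u v K : (forall b, 0 <= w b) -> (forall b, 0 <= u b) -> (forall b, 0 <= v b) ->
  (forall b, w b <= u b + v b) ->
  ssum (fun b => w b ^2) K <= (sqrt (ssum (fun b => u b ^2) K) + sqrt (ssum (fun b => v b^2) K))^2.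
Proof. intros Hw Hu Hv H.
  apply Rle_trans with (ssum (fun b => (u b + v b)^2) K).
  - apply ssum_le; intros b _. specialize (Hw b); specialize (H b). nra.
  - apply sq_le_of_sqrt; [apply ssum_nonneg; intros; apply pow2_ge_0|]. apply mink.
Qed.


Lemma maxabs_nonneg v m : 0 <= maxabs v m.
Proof. induction m; simpl; [apply Rabs_pos|]. apply Rle_trans with (maxabs v m); [auto|apply Rmax_l]. Qed.

Lemma maxabs_ge v m k : (k <= m)%nat -> Rabs (v k) <= maxabs v m.
Proof. induction m; intros Hk; simpl.
  - replace k with 0%nat by lia; lra.
  - destruct (Nat.eq_dec k (S m)) as [->|Hn]; [apply Rmax_r|].
    apply Rle_trans with (maxabs v m); [apply IHm; lia|apply Rmax_l]. Qed.

Lemma maxabs_le v m c : (forall k, (k <= m)%nat -> Rabs (v k) <= c) -> maxabs v m <= c.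
Proof. induction m; intros H; simpl; [apply H; lia|].
  apply Rmax_lub; [apply IHm; intros; apply H; lia|apply H; lia]. Qed.

Lemma maxabs_scale c v m : maxabs (fun k => c * v k) m = Rabs c * maxabs v m.
Proof. induction m; simpl; [apply Rabs_mult|]. rewrite IHm, Rabs_mult. apply RmaxRmult, Rabs_pos. Qed.

Definition Q (K : nat) (x : seqY) : R := ssum (fun b => blocknorm x b ^ 2) K.
Definition Qr (N K : nat) (x : seqY) : R :=
  ssum (fun b => (if (b <? N)%nat then 0 else blocknorm x b) ^ 2) K.
Definition summable (x : seqY) := exists l, infinite_sum (fun n => blocknorm x n ^ 2) l.

Lemma bn_nonneg x b : 0 <= blocknorm x b.
Proof. apply maxabs_nonneg. Qed.

Lemma Q_nonneg K x : 0 <= Q K x.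
Proof. apply ssum_nonneg; intros; apply pow2_ge_0. Qed.
Lemma Qr_nonneg N K x : 0 <= Qr N K x.
Proof. apply ssum_nonneg; intros; apply pow2_ge_0. Qed.

Lemma Q_mono K K' x : (K <= K')%nat -> Q K x <= Q K' x.
Proof. intros; apply ssum_mono; auto; intros; apply pow2_ge_0. Qed.

Lemma Q_split N K x : (N <= K)%nat -> Q K x = Q N x + Qr N K x.
Proof. intros H. unfold Q, Qr. rewrite (ssum_split _ N K H). f_equal.
  apply ssum_ext; intros b _. destruct (b <? N)%nat; ring. Qed.

Lemma bn_tri x y z b : blocknorm (subY x z) b <= blocknorm (subY x y) b + blocknorm (subY y z) b.
Proof. unfold blocknorm, subY. apply maxabs_le; intros k Hk.
  pose proof (maxabs_ge (fun k => x b k - y b k) b k Hk).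
  pose proof (maxabs_ge (fun k => y b k - z b k) b k Hk). simpl in *.
  replace (x b k - z b k) with ((x b k - y b k) + (y b k - z b k)) by ring.
  pose proof (Rabs_triang (x b k - y b k) (y b k - z b k)). lra. Qed.

Lemma bn_sym x y b : blocknorm (subY x y) b = blocknorm (subY y x) b.
Proof. unfold blocknorm, subY. apply Rle_antisym; apply maxabs_le; intros k Hk;
  [pose proof (maxabs_ge (fun k => y b k - x b k) b k Hk)|pose proof (maxabs_ge (fun k => x b k - y b k) b k Hk)];
  simpl in *; rewrite Rabs_minus_sym; auto. Qed.

Lemma Q_sym K x y : Q K (subY x y) = Q K (subY y x).
Proof. unfold Q. apply ssum_ext; intros; rewrite bn_sym; auto. Qed.

Lemma inf_sum_ge g l : infinite_sum g l -> (forall b, 0 <= g b) -> forall K, ssum g K <= l.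
Proof. intros Hs Hg K. destruct (Rle_or_lt (ssum g K) l) as [|Hlt]; auto.
  destruct (Hs (ssum g K - l)) as [N HN]; [lra|].
  specialize (HN (N + K)%nat ltac:(lia)). rewrite ssum_sumf in HN.
  assert (ssum g K <= ssum g (S (N + K))) by (apply ssum_mono; auto; lia).
  unfold Rdist in HN. apply Rabs_def2 in HN. lra. Qed.

Lemma inf_sum_le g l X : infinite_sum g l -> (forall K, ssum g K <= X) -> l <= X.
Proof. intros Hs H. destruct (Rle_or_lt l X) as [|Hlt]; auto.
  destruct (Hs (l - X)) as [N HN]; [lra|]. specialize (HN N ltac:(lia)). rewrite ssum_sumf in HN.
  specialize (H (S N)). unfold Rdist in HN. apply Rabs_def2 in HN. lra. Qed.

Lemma sum_exists g M : (forall b, 0 <= g b) -> (forall K, ssum g K <= M) -> exists l, infinite_sum g l.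
Proof. intros Hg H.
  assert (Hgr: Un_growing (sum_f_R0 g)). { intro n. rewrite !ssum_sumf. cbn [ssum]. specialize (Hg (S n)).
     cbn [ssum] in *. lra. }
  assert (Hb: has_ub (sum_f_R0 g)). { exists M. intros y [n ->]. rewrite ssum_sumf; apply H. }
  destruct (growing_cv _ Hgr Hb) as [l Hl]. exists l. exact Hl. Qed.

Lemma inY_summable x : inY x -> summable x.
Proof. intros [_ H]; exact H. Qed.

Lemma summable_bound x : summable x -> exists M, forall K, Q K x <= M.
Proof. intros [l Hl]. exists l. intro K. apply (inf_sum_ge _ _ Hl). intros; apply pow2_ge_0. Qed.

Lemma summable_sub x y : inY x -> inY y -> summable (subY x y).
Proof. intros Hx Hy. destruct (summable_bound x (inY_summable x Hx)) as [Mx HMx].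
  destruct (summable_bound y (inY_summable y Hy)) as [My HMy].
  apply (sum_exists _ (2 * Mx + 2 * My)); [intros; apply pow2_ge_0|]. intro K.
  apply Rle_trans with (ssum (fun b => 2 * blocknorm x b ^ 2 + 2 * blocknorm y b ^2) K).
  - apply ssum_le; intros b _.
    assert (blocknorm (subY x y) b <= blocknorm x b + blocknorm y b).
    { unfold blocknorm, subY. apply maxabs_le; intros k Hk.
      pose proof (maxabs_ge (x b) b k Hk). pose proof (maxabs_ge (y b) b k Hk).
      pose proof (Rabs_triang (x b k) (- y b k)). rewrite Rabs_Ropp in *. unfold Rminus. lra. }
    pose proof (bn_nonneg (subY x y) b). pose proof (bn_nonneg x b). pose proof (bn_nonneg y b).
    assert (0 <= (blocknorm x b - blocknorm y b)^2) by apply pow2_ge_0. nra.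
  - assert (E: forall K, ssum (fun b => 2 * blocknorm x b ^ 2 + 2 * blocknorm y b ^2) K = 2 * Q K x + 2 * Q K y).
    { induction K0; cbn [ssum]; unfold Q in *; cbn [ssum]; [ring|]. rewrite IHK0; ring. }
    rewrite E. specialize (HMx K); specialize (HMy K); lra.
Qed.

Lemma normY_nonneg z : 0 <= normY z.
Proof. apply sqrt_pos. Qed.

Lemma normY_spec z : summable z ->
  infinite_sum (fun n => blocknorm z n ^ 2) (epsilon (inhabits 0) (fun l => infinite_sum (fun n => blocknorm z n ^ 2) l)).
Proof. intros H. apply epsilon_spec. exact H. Qed.

Lemma normY_le z X : summable z -> 0 <= X -> (forall K, Q K z <= X ^ 2) -> normY z <= X.
Proof. intros Hs HX H. unfold normY. apply sqrt_le_sq; auto.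
  apply (inf_sum_le _ _ _ (normY_spec z Hs)). exact H. Qed.

Lemma Q_le_normY z K : summable z -> Q K z <= normY z ^ 2.
Proof. intros Hs. unfold normY. pose proof (normY_spec z Hs) as HH.
  set (l := epsilon _ _) in *.
  assert (Hl: Q K z <= l) by (apply (inf_sum_ge _ _ HH); intros; apply pow2_ge_0).
  assert (0 <= l) by (pose proof (Q_nonneg K z); lra).
  rewrite <- Rsqr_pow2, Rsqr_sqrt; auto. Qed.

Lemma sqrtQ_le_normY z K : summable z -> sqrt (Q K z) <= normY z.
Proof. intros Hs. apply sqrt_le_sq; [apply normY_nonneg|]. apply Q_le_normY; auto. Qed.

Lemma tail_small z eta : summable z -> 0 < eta -> exists N, forall K, Qr N K z <= eta.
Proof. intros Hs He. pose proof (normY_spec z Hs) as HH. set (l := epsilon _ _) in *.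
  destruct (HH eta He) as [N0 HN]. exists (S N0). intro K.
  specialize (HN N0 ltac:(lia)). rewrite ssum_sumf in HN. unfold Rdist in HN. apply Rabs_def2 in HN.
  destruct (Compare_dec.le_lt_dec (S N0) K) as [Hk|Hk].
  - pose proof (Q_split (S N0) K z Hk).
    assert (Q K z <= l) by (apply (inf_sum_ge _ _ HH); intros; apply pow2_ge_0).
    unfold Q in *. lra.
  - unfold Qr. rewrite (ssum_ext _ (fun _ => 0)). { assert (ssum (fun _ => 0) K = 0) by (clear; induction K; cbn [ssum]; lra). lra. }
    intros b Hb. replace (b <? S N0)%nat with true by (symmetry; apply Nat.ltb_lt; lia). ring.
Qed.

Lemma dY_sym x y : inY x -> inY y -> dY x y = dY y x.
Proof. intros Hx Hy. unfold dY. apply Rle_antisym; apply normY_le; try apply summable_sub; auto;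
  try apply normY_nonneg; intro K; rewrite Q_sym; apply Q_le_normY; apply summable_sub; auto. Qed.

Lemma dY_tri x y z : inY x -> inY y -> inY z -> dY x z <= dY x y + dY y z.
Proof. intros Hx Hy Hz. unfold dY. apply normY_le; [apply summable_sub; auto| |].
  { pose proof (normY_nonneg (subY x y)); pose proof (normY_nonneg (subY y z)); lra. }
  intro K. unfold Q. eapply Rle_trans.
  - apply (ssq_tri _ (blocknorm (subY x y)) (blocknorm (subY y z))); intros; try apply bn_nonneg. apply bn_tri.
  - pose proof (sqrtQ_le_normY (subY x y) K (summable_sub x y Hx Hy)).
    pose proof (sqrtQ_le_normY (subY y z) K (summable_sub y z Hy Hz)). unfold Q in *.
    pose proof (sqrt_pos (ssum (fun b => blocknorm (subY x y) b ^2) K)).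
    pose proof (sqrt_pos (ssum (fun b => blocknorm (subY y z) b ^2) K)).
    apply pow_incr. lra.
Qed.


Lemma cp_app p a b : common_prefix_len (p ++ a) (p ++ b) = (length p + common_prefix_len a b)%nat.
Proof. induction p; simpl; auto. rewrite Nat.eqb_refl, IHp; reflexivity. Qed.

Lemma cp_sym s t : common_prefix_len s t = common_prefix_len t s.
Proof. revert t; induction s; destruct t; simpl; auto.
  rewrite Nat.eqb_sym. destruct (Nat.eqb n a); auto. Qed.

Lemma cp_le s t : (common_prefix_len s t <= length s /\ common_prefix_len s t <= length t)%nat.
Proof. revert t; induction s; destruct t; simpl; try lia.
  destruct (Nat.eqb a n); [specialize (IHs t); lia|lia]. Qed.

Lemma dT_eq s t : dT s t = INR (length s) + INR (length t) - 2 * INR (common_prefix_len s t).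
Proof. unfold dT. pose proof (cp_le s t).
  rewrite minus_INR by lia. rewrite plus_INR, mult_INR. simpl. ring. Qed.

Lemma dT_sym s t : dT s t = dT t s.
Proof. rewrite !dT_eq, cp_sym. ring. Qed.

Lemma dT_nonneg s t : 0 <= dT s t.
Proof. unfold dT. apply pos_INR. Qed.

Lemma decomp s t : exists p s' t', s = p ++ s' /\ t = p ++ t' /\ common_prefix_len s' t' = 0%nat.
Proof. revert t; induction s as [|a s IH]; intros t.
  - exists [], [], t; auto.
  - destruct t as [|b t].
    + exists [], (a::s), []; auto.
    + destruct (Nat.eq_dec a b) as [<-|Hab].
      * destruct (IH t) as (p & s' & t' & -> & -> & H). exists (a::p), s', t'; auto.
      * exists [], (a::s), (b::t); simpl; repeat split; auto.
        apply Nat.eqb_neq in Hab; rewrite Hab; auto.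
Qed.

Lemma dT_decomp p s' t' : common_prefix_len s' t' = 0%nat -> dT (p ++ s') (p ++ t') = INR (length s' + length t').
Proof. intros H. unfold dT. rewrite cp_app, H, !length_app. f_equal; lia. Qed.

Lemma dT_child t c : dT (t ++ [c]) t = 1.
Proof. rewrite <- (app_nil_r t) at 2. rewrite dT_decomp by reflexivity. simpl. ring. Qed.

Lemma dT_child' t c : dT t (t ++ [c]) = 1.
Proof. rewrite dT_sym; apply dT_child. Qed.

Lemma dT_sib t n m : n <> m -> dT (t ++ [n]) (t ++ [m]) = 2.
Proof. intros H. rewrite dT_decomp; [simpl; ring|]. simpl. apply Nat.eqb_neq in H; rewrite H; auto. Qed.

Lemma cp_full s t : common_prefix_len s t = length s -> length s = length t -> s = t.
Proof. revert t; induction s; destruct t; simpl; intros; try lia; auto.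
  destruct (Nat.eqb a n) eqn:E; [|lia]. apply Nat.eqb_eq in E; subst. f_equal. apply IHs; lia. Qed.

Lemma dT_zero s t : dT s t = 0 -> s = t.
Proof. unfold dT. intros H. replace 0 with (INR 0) in H by reflexivity. apply INR_eq in H.
  pose proof (cp_le s t). apply cp_full; lia. Qed.

Lemma dT_refl s : dT s s = 0.
Proof. rewrite <- (app_nil_r s). rewrite dT_decomp by reflexivity. reflexivity. Qed.

Lemma cp_min s t p : (Nat.min (common_prefix_len s t) (common_prefix_len t p) <= common_prefix_len s p)%nat.
Proof. revert t p; induction s; destruct t, p; simpl; try lia.
  destruct (Nat.eqb a n) eqn:E1; destruct (Nat.eqb n n0) eqn:E2; try lia.
  apply Nat.eqb_eq in E1, E2; subst. rewrite Nat.eqb_refl. specialize (IHs t p). lia. Qed.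

Lemma dT_tri s t p : dT s p <= dT s t + dT t p.
Proof. rewrite !dT_eq. pose proof (cp_min s t p). pose proof (cp_le s t). pose proof (cp_le t p).
  assert (INR (common_prefix_len s t) + INR (common_prefix_len t p) <= INR (length t) + INR (common_prefix_len s p)).
  { rewrite <- !plus_INR. apply le_INR. lia. }
  lra. Qed.


Lemma row_bound (g : vertex -> R) F : exists M, forall t, In t F -> g t <= M.
Proof. induction F as [|a F [M HM]]; [exists 0; intros t []|].
  exists (Rmax (g a) M). intros t [<-|Ht]; [apply Rmax_l|]. apply Rle_trans with M; [auto|apply Rmax_r]. Qed.

Lemma pair_bound (h : vertex -> vertex -> R) F : exists M, forall s t, In s F -> In t F -> h s t <= M.
Proof. induction F as [|a F [M HM]]; [exists 0; intros s t []|].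
  destruct (row_bound (h a) (a::F)) as [M1 H1]. destruct (row_bound (fun s => h s a) (a::F)) as [M2 H2].
  exists (Rmax M (Rmax M1 M2)). intros s t [<-|Hs] [<-|Ht].
  - eapply Rle_trans; [apply H1; left; auto|]. eapply Rle_trans; [apply Rmax_l|apply Rmax_r].
  - eapply Rle_trans; [apply H1; right; auto|]. eapply Rle_trans; [apply Rmax_l|apply Rmax_r].
  - eapply Rle_trans; [apply (H2 s); right; auto|]. eapply Rle_trans; [apply Rmax_r|apply Rmax_r].
  - eapply Rle_trans; [apply HM; auto|apply Rmax_l].
Qed.

Lemma lub_of_spec E : bound E -> (exists x, E x) -> is_lub E (lub_of E).
Proof. intros Hb Hne. unfold lub_of. apply epsilon_spec. apply upper_bound_thm; auto. Qed.

Lemma pairset_lub F (h : vertex -> vertex -> R) s0 t0 : In s0 F -> In t0 F -> s0 <> t0 ->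
  is_lub (fun r => exists s t, In s F /\ In t F /\ s <> t /\ r = h s t)
         (lub_of (fun r => exists s t, In s F /\ In t F /\ s <> t /\ r = h s t)).
Proof. intros H1 H2 H3. apply lub_of_spec.
  - destruct (pair_bound h F) as [M HM]. exists M. intros r (s & t & Hs & Ht & _ & ->). auto.
  - exists (h s0 t0), s0, t0; auto.
Qed.

Lemma dT_pos s t : s <> t -> 0 < dT s t.
Proof. intros H. destruct (Rle_lt_or_eq_dec 0 (dT s t) (dT_nonneg s t)) as [|E]; auto.
  exfalso; apply H, dT_zero; auto. Qed.

Lemma dY_zero_eq x y : inY x -> inY y -> dY x y <= 0 -> x = y.
Proof. intros Hx Hy H. apply functional_extensionality; intro n; apply functional_extensionality; intro k.
  destruct (Compare_dec.le_lt_dec k n) as [Hk|Hk].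
  - assert (Rabs (x n k - y n k) <= 0).
    { apply Rle_trans with (blocknorm (subY x y) n).
      - unfold blocknorm, subY. apply (maxabs_ge (fun k => x n k - y n k) n k Hk).
      - apply Rle_trans with (sqrt (Q (S n) (subY x y))).
        + rewrite <- (sqrt_pow2 _ (bn_nonneg (subY x y) n)). apply sqrt_le_1_alt.
          unfold Q; cbn [ssum]. pose proof (Q_nonneg n (subY x y)); unfold Q in *; lra.
        + apply Rle_trans with (dY x y); auto. apply sqrtQ_le_normY, summable_sub; auto. }
    pose proof (Rabs_pos (x n k - y n k)). assert (Rabs (x n k - y n k) = 0) by lra.
    destruct (Req_dec (x n k - y n k) 0) as [E|E]; [lra|]. apply Rabs_no_R0 in E; lra.
  - destruct Hx as [Hx _]; destruct Hy as [Hy _]. rewrite Hx, Hy; auto.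
Qed.

Lemma distortion_ge1 F c : (exists s t, In s F /\ In t F /\ s <> t) -> distortions F c -> 1 <= c.
Proof. intros (s & t & Hs & Ht & Hst) (f & Hin & Hinj & ->).
  assert (Hd: 0 < dT s t) by (apply dT_pos; auto).
  assert (Hy: 0 < dY (f s) (f t)).
  { destruct (Rle_or_lt (dY (f s) (f t)) 0) as [Hle|]; auto. exfalso. apply Hst, Hinj; auto.
    apply dY_zero_eq; auto. }
  pose proof (pairset_lub F (fun s t => dY (f s) (f t) / dT s t) s t Hs Ht Hst) as [L1 _].
  pose proof (pairset_lub F (fun s t => dT s t / dY (f s) (f t)) s t Hs Ht Hst) as [L2 _].
  assert (H1: dY (f s) (f t) / dT s t <= LipF F f) by (apply L1; exists s, t; auto).
  assert (H2: dT s t / dY (f s) (f t) <= LipInvF F f) by (apply L2; exists s, t; auto).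
  assert (Hp: (dY (f s) (f t) / dT s t) * (dT s t / dY (f s) (f t)) = 1) by (field; lra).
  assert (0 < dY (f s) (f t) / dT s t) by (apply Rdiv_lt_0_compat; auto).
  assert (0 < dT s t / dY (f s) (f t)) by (apply Rdiv_lt_0_compat; auto).
  nra.
Qed.

Definition fr (F : list vertex) (s : vertex) : seqY :=
  fun n k => if (n =? pred (length F))%nat then (if (k <=? n)%nat then dT s (nth k F []) else 0) else 0.

Lemma maxabs_zero v m : (forall k, (k <= m)%nat -> v k = 0) -> maxabs v m = 0.
Proof. intros H. apply Rle_antisym; [|apply maxabs_nonneg]. apply maxabs_le. intros k Hk; rewrite H; auto. rewrite Rabs_R0; lra. Qed.

Lemma ssum_single g j K : (forall b, b <> j -> g b = 0) -> 0 <= g j -> ssum g K <= g j.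
Proof. intros H Hj. induction K; cbn [ssum]; [lra|]. destruct (Nat.eq_dec K j) as [->|Hn].
  - assert (ssum g j = 0). { clear IHK. assert (forall K, (K <= j)%nat -> ssum g K = 0).
      { induction K; cbn [ssum]; intros; auto. rewrite IHK, H by lia. ring. } apply H0; lia. }
    lra.
  - rewrite H by auto. lra. Qed.

Lemma fr_bn_other F s t b : b <> pred (length F) -> blocknorm (subY (fr F s) (fr F t)) b = 0.
Proof. intros H. unfold blocknorm, subY, fr. apply maxabs_zero. intros k _.
  apply Nat.eqb_neq in H; rewrite H. ring. Qed.

Lemma fr_bn F s t : In s F -> In t F -> blocknorm (subY (fr F s) (fr F t)) (pred (length F)) = dT s t.
Proof. intros Hs Ht. set (m := pred (length F)). unfold blocknorm, subY, fr. fold m. rewrite Nat.eqb_refl.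
  apply Rle_antisym.
  - apply maxabs_le. intros k Hk. apply Nat.leb_le in Hk; rewrite Hk.
    set (p := nth k F []). apply Rabs_le. pose proof (dT_tri s t p). pose proof (dT_tri t s p).
    rewrite (dT_sym t s) in H0. lra.
  - destruct (In_nth F s [] Hs) as [k [Hk Hn]].
    assert (Hkm: (k <= m)%nat) by (unfold m; lia).
    pose proof (maxabs_ge (fun k0 : nat => (if (k0 <=? m)%nat then dT s (nth k0 F []) else 0) -
       (if (k0 <=? m)%nat then dT t (nth k0 F []) else 0)) m k Hkm) as HH. simpl in HH.
    apply Nat.leb_le in Hkm. rewrite Hkm, Hn, dT_refl in HH. rewrite dT_sym.
    rewrite Rabs_minus_sym, Rminus_0_r, Rabs_right in HH; auto. apply Rle_ge, dT_nonneg.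
Qed.

Lemma fr_inY F s : inY (fr F s).
Proof. split.
  - intros n k Hnk. unfold fr. destruct (n =? _)%nat; auto.
    replace (k <=? n)%nat with false by (symmetry; apply Nat.leb_gt; lia). auto.
  - apply (sum_exists _ (blocknorm (fr F s) (pred (length F)) ^ 2)); [intros; apply pow2_ge_0|].
    intro K. apply (ssum_single (fun b => blocknorm (fr F s) b ^2) (pred (length F))); [|apply pow2_ge_0]. intros b Hb.
    unfold blocknorm, fr. rewrite maxabs_zero; [ring|]. intros k _. apply Nat.eqb_neq in Hb; rewrite Hb; auto.
Qed.

Lemma fr_dY F s t : In s F -> In t F -> dY (fr F s) (fr F t) = dT s t.
Proof. intros Hs Ht. assert (HF: (0 < length F)%nat) by (destruct F; [destruct Hs|simpl; lia]).
  apply Rle_antisym.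
  - unfold dY. apply normY_le; [apply summable_sub; apply fr_inY|apply dT_nonneg|].
    intro K. unfold Q. rewrite <- (fr_bn F s t Hs Ht). apply (ssum_single (fun b => blocknorm (subY (fr F s) (fr F t)) b ^2) (pred (length F))); [|apply pow2_ge_0].
    intros b Hb. rewrite fr_bn_other; auto. ring.
  - apply Rle_trans with (sqrt (Q (length F) (subY (fr F s) (fr F t)))).
    + rewrite <- (fr_bn F s t Hs Ht). apply Rle_trans with (sqrt (blocknorm (subY (fr F s) (fr F t)) (pred (length F)) ^2)).
      * rewrite sqrt_pow2; [lra|apply bn_nonneg].
      * apply sqrt_le_1_alt. unfold Q. remember (pred (length F)) as m. replace (length F) with (S m) by lia. cbn [ssum].
        pose proof (ssum_nonneg (fun b => blocknorm (subY (fr F s) (fr F t)) b ^2) m ltac:(intros; apply pow2_ge_0)). lra.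
    + apply sqrtQ_le_normY, summable_sub; apply fr_inY.
Qed.

Lemma lub_const F (h : vertex -> vertex -> R) s0 t0 : In s0 F -> In t0 F -> s0 <> t0 ->
  (forall s t, In s F -> In t F -> s <> t -> h s t = 1) ->
  lub_of (fun r => exists s t, In s F /\ In t F /\ s <> t /\ r = h s t) = 1.
Proof. intros H1 H2 H3 Hc. pose proof (pairset_lub F h s0 t0 H1 H2 H3) as HL.
  apply (is_lub_u _ _ _ HL). split.
  - intros r (s & t & Hs & Ht & Hst & ->). rewrite Hc; auto; lra.
  - intros b Hb. apply Hb. exists s0, t0. rewrite Hc; auto.
Qed.

Theorem part1 F : (exists s t, In s F /\ In t F /\ s <> t) -> cY_is F 1.
Proof. intros Hne. split.
  - intros c Hc. apply (distortion_ge1 F c Hne Hc).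
  - intros b Hb. apply Hb. destruct Hne as (s0 & t0 & Hs0 & Ht0 & Hst0).
    exists (fr F). split; [intros; apply fr_inY|]. split.
    + intros s t Hs Ht E. apply dT_zero. rewrite <- (fr_dY F s t Hs Ht), E. unfold dY.
      apply Rle_antisym; [|apply normY_nonneg]. apply normY_le; [apply summable_sub; apply fr_inY|lra|].
      intro K. unfold Q. rewrite (ssum_ext _ (fun _ => 0)). { assert (ssum (fun _ => 0) K = 0) by (clear; induction K; cbn [ssum]; lra). lra. }
      intros b' _. unfold blocknorm, subY. rewrite maxabs_zero; [ring|]. intros; ring.
    + unfold LipF, LipInvF. rewrite !(lub_const F _ s0 t0); auto; [lra| |];
      intros s t Hs Ht Hst; rewrite fr_dY by auto; field; apply Rgt_not_eq, dT_pos; auto.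
Qed.


Definition Inf (P : nat -> Prop) := forall M, exists n, (M <= n)%nat /\ P n.

Lemma inf_or P Q1 Q2 : Inf P -> (forall n, P n -> Q1 n \/ Q2 n) ->
  Inf (fun n => P n /\ Q1 n) \/ Inf (fun n => P n /\ Q2 n).
Proof. intros HP H. destruct (classic (Inf (fun n => P n /\ Q1 n))) as [|N1]; [left; auto|right].
  assert (HM: exists M1, forall n, (M1 <= n)%nat -> ~ (P n /\ Q1 n)).
  { apply NNPP; intro C. apply N1. intro M. apply NNPP; intro C2. apply C. exists M. intros n Hn HPQ. apply C2. exists n; auto. }
  destruct HM as [M1 HM1]. intro M. destruct (HP (Nat.max M M1)) as [n [Hn Pn]].
  exists n. split; [lia|]. split; auto. destruct (H n Pn); auto. exfalso; apply (HM1 n); [lia|auto].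
Qed.

Lemma inf_interval (v : nat -> R) d : 0 < d -> forall K a P, Inf P -> (forall n, P n -> a <= v n <= a + INR K * d) ->
  exists c, Inf (fun n => P n /\ c <= v n <= c + d).
Proof. intros Hd K; induction K; intros a P HP H.
  - exists a. intro M. destruct (HP M) as [n [Hn Pn]]. exists n. specialize (H n Pn). simpl in H. repeat split; auto; lra.
  - destruct (inf_or P (fun n => v n <= a + d) (fun n => a + d <= v n) HP) as [H1|H2].
    { intros n _. destruct (Rle_or_lt (v n) (a + d)); [left|right]; lra. }
    + exists a. intro M. destruct (H1 M) as [n [Hn [Pn Hv]]]. exists n. specialize (H n Pn). repeat split; auto; lra.
    + destruct (IHK (a + d) (fun n => P n /\ a + d <= v n) H2) as [c Hc].
      { intros n [Pn Hv]. specialize (H n Pn). rewrite S_INR in H. split; lra. }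
      exists c. intro M. destruct (Hc M) as [n [Hn [[Pn _] Hv]]]. exists n; auto.
Qed.

Lemma inf_coords (w : nat -> nat*nat -> R) Bd d : 0 < d -> 0 <= Bd -> forall (L : list (nat*nat)) P, Inf P ->
  (forall n c, P n -> In c L -> Rabs (w n c) <= Bd) ->
  exists P', (forall n, P' n -> P n) /\ Inf P' /\ forall n m c, P' n -> P' m -> In c L -> Rabs (w n c - w m c) <= d.
Proof. intros Hd HB L; induction L as [|c0 L IH]; intros P HP H.
  - exists P; repeat split; auto. intros n m c _ _ [].
  - destruct (INR_unbounded (2*Bd/d)) as [K HK].
    assert (HKd: 2 * Bd <= INR K * d).
    { apply Rmult_gt_compat_r with (r := d) in HK; auto. unfold Rdiv in HK. rewrite Rmult_assoc, Rinv_l in HK; lra. }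
    destruct (inf_interval (fun n => w n c0) d Hd K (-Bd) P HP) as [c Hc].
    { intros n Pn. specialize (H n c0 Pn (or_introl eq_refl)).
      pose proof (Rle_abs (w n c0)). pose proof (Rle_abs (- w n c0)). rewrite Rabs_Ropp in *. split; lra. }
    destruct (IH (fun n => P n /\ c <= w n c0 <= c + d) Hc) as (P' & H1 & H2 & H3).
    { intros n c' [Pn _] Hc'. apply H; auto. right; auto. }
    exists P'. split; [intros n Hn; apply H1; auto|]. split; auto.
    intros n m c' Hn Hm [<-|Hc'].
    + destruct (H1 n Hn) as [_ Hn']. destruct (H1 m Hm) as [_ Hm']. apply Rabs_le. lra.
    + apply H3; auto.
Qed.

Lemma Q_tri K x y z : Q K (subY x z) <= (sqrt (Q K (subY x y)) + sqrt (Q K (subY y z)))^2.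
Proof. unfold Q. apply (ssq_tri _ (blocknorm (subY x y)) (blocknorm (subY y z))); intros; try apply bn_nonneg. apply bn_tri. Qed.

Lemma Qr_tri N K x y z : Qr N K (subY x z) <= (sqrt (Qr N K (subY x y)) + sqrt (Qr N K (subY y z)))^2.
Proof. unfold Qr.
  apply (ssq_tri (fun b => if (b <? N)%nat then 0 else blocknorm (subY x z) b)
    (fun b => if (b <? N)%nat then 0 else blocknorm (subY x y) b) (fun b => if (b <? N)%nat then 0 else blocknorm (subY y z) b));
  intros b; destruct (b <? N)%nat; try lra; try apply bn_nonneg. apply bn_tri. Qed.

Lemma Qr_sym N K x y : Qr N K (subY x y) = Qr N K (subY y x).
Proof. unfold Qr. apply ssum_ext; intros; rewrite bn_sym; auto. Qed.

Lemma Qr_le_Q N K x : (N <= K)%nat -> Qr N K x <= Q K x.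
Proof. intros H. rewrite (Q_split N K x H). pose proof (Q_nonneg N x); lra. Qed.

Lemma head_lemma (f : vertex -> seqY) A B : 0 < A -> (forall s, inY (f s)) ->
  (forall s t, A * dT s t <= dY (f s) (f t) <= B * dT s t) ->
  forall t N, exists c, Q N (subY (f (t ++ [c])) (f t)) <= B^2 - A^2 + A^2/8.
Proof.
  intros HA Hin Hf t N. apply NNPP; intro Hno.
  assert (Hbad: forall c, B^2 - A^2 + A^2/8 < Q N (subY (f (t ++ [c])) (f t))).
  { intro c. apply Rnot_le_lt. intro Hc. apply Hno. exists c; auto. }
  set (eps := A^2/8).
  assert (Heps: 0 < eps) by (unfold eps; nra).
  assert (HAB: A <= B). { destruct (Hf ([0%nat]) []) as [H1 H2]. pose proof (dT_child [] 0%nat) as E; simpl in E; rewrite E in *. lra. }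
  assert (Hedge: forall c, dY (f (t ++ [c])) (f t) <= B). { intro c. destruct (Hf (t ++ [c]) t) as [_ H]. rewrite dT_child in H. lra. }
  set (d := sqrt (eps / (INR N + 1))).
  assert (HN1: 0 < INR N + 1) by (pose proof (pos_INR N); lra).
  assert (Hd: 0 < d) by (apply sqrt_lt_R0; apply Rdiv_lt_0_compat; auto).
  assert (Hd2: INR N * d^2 <= eps).
  { unfold d. rewrite <- Rsqr_pow2, Rsqr_sqrt by (apply Rlt_le, Rdiv_lt_0_compat; auto).
    apply Rmult_le_reg_r with (INR N + 1); auto. unfold Rdiv. rewrite Rmult_assoc, (Rmult_assoc eps), Rinv_l by lra.
    pose proof (pos_INR N). nra. }
  set (w := fun n (c : nat*nat) => f (t ++ [n]) (fst c) (snd c) - f t (fst c) (snd c)).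
  destruct (inf_coords w B d Hd ltac:(lra) (list_prod (seq 0 N) (seq 0 N)) (fun _ => True)) as (P' & _ & HP' & Hclose).
  { intro M. exists M; auto. }
  { intros n [b k] _ _. unfold w; simpl.
    destruct (Compare_dec.le_lt_dec k b) as [Hk|Hk].
    - apply Rle_trans with (blocknorm (subY (f (t ++ [n])) (f t)) b).
      + unfold blocknorm, subY. apply (maxabs_ge (fun k => f (t ++ [n]) b k - f t b k) b k Hk).
      + apply Rle_trans with (sqrt (Q (S b) (subY (f (t ++ [n])) (f t)))).
        * rewrite <- (sqrt_pow2 _ (bn_nonneg (subY (f (t ++ [n])) (f t)) b)). apply sqrt_le_1_alt.
          unfold Q; cbn [ssum]. pose proof (Q_nonneg b (subY (f (t ++ [n])) (f t))); unfold Q in *; lra.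
        * apply Rle_trans with (dY (f (t ++ [n])) (f t)); [apply sqrtQ_le_normY, summable_sub; auto|apply Hedge].
    - destruct (Hin (t ++ [n])) as [Z1 _]. destruct (Hin t) as [Z2 _]. rewrite Z1, Z2 by auto.
      rewrite Rminus_0_r, Rabs_R0; lra. }
  destruct (HP' 0%nat) as [n [_ Pn]]. destruct (HP' (S n)) as [m [Hm Pm]].
  assert (Hnm: n <> m) by lia.
  set (cn := t ++ [n]). set (cm := t ++ [m]).
  assert (Hclose2: Q N (subY (f cn) (f cm)) <= eps).
  { eapply Rle_trans; [|apply Hd2]. unfold Q. apply ssum_const_bound. intros b Hb.
    assert (blocknorm (subY (f cn) (f cm)) b <= d).
    { unfold blocknorm, subY. apply maxabs_le. intros k Hk.
      replace (f cn b k - f cm b k) with (w n (b,k) - w m (b,k)) by (unfold w, cn, cm; simpl; ring).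
      apply Hclose; auto. apply in_prod; apply in_seq; lia. }
    pose proof (bn_nonneg (subY (f cn) (f cm)) b). nra. }
  set (sig := A^2 - eps).
  assert (Htail: forall c K, (N <= K)%nat -> Qr N K (subY (f (t ++ [c])) (f t)) <= sig).
  { intros c K HK. pose proof (Q_split N K (subY (f (t ++ [c])) (f t)) HK).
    pose proof (Q_le_normY (subY (f (t ++ [c])) (f t)) K (summable_sub _ _ (Hin _) (Hin _))).
    pose proof (Hedge c). pose proof (normY_nonneg (subY (f (t ++ [c])) (f t))). unfold dY in *.
    assert (normY (subY (f (t ++ [c])) (f t)) ^2 <= B^2) by (apply pow_incr; lra).
    specialize (Hbad c). unfold sig, eps in *. lra. }
  assert (Hsig: 0 < sig) by (unfold sig, eps; nra).
  assert (Hup: dY (f cn) (f cm) <= sqrt (4 * A^2 - 3 * eps)).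
  { unfold dY. apply normY_le; [apply summable_sub; auto|apply sqrt_pos|].
    rewrite <- Rsqr_pow2, Rsqr_sqrt by (unfold eps; nra).
    intro K. set (K' := Nat.max K N).
    apply Rle_trans with (Q K' (subY (f cn) (f cm))); [apply Q_mono; lia|].
    rewrite (Q_split N K') by lia.
    pose proof (Qr_tri N K' (f cn) (f t) (f cm)) as HT. rewrite (Qr_sym N K' (f t) (f cm)) in HT.
    pose proof (Htail n K' ltac:(lia)). pose proof (Htail m K' ltac:(lia)). fold cn cm in H, H0.
    assert (sqrt (Qr N K' (subY (f cn) (f t))) <= sqrt sig) by (apply sqrt_le_1_alt; auto).
    assert (sqrt (Qr N K' (subY (f cm) (f t))) <= sqrt sig) by (apply sqrt_le_1_alt; auto).
    pose proof (sqrt_pos (Qr N K' (subY (f cn) (f t)))). pose proof (sqrt_pos (Qr N K' (subY (f cm) (f t)))).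
    assert (H5: (sqrt (Qr N K' (subY (f cn) (f t))) + sqrt (Qr N K' (subY (f cm) (f t))))^2 <= (2 * sqrt sig)^2)
      by (apply pow_incr; lra).
    replace ((2 * sqrt sig)^2) with (4 * (sqrt sig)^2) in H5 by ring.
    rewrite <- (Rsqr_pow2 (sqrt sig)), Rsqr_sqrt in H5 by lra. unfold sig in H5. lra. }
  destruct (Hf cn cm) as [Hlow _]. unfold cn, cm in Hlow. rewrite dT_sib in Hlow by auto. fold cn cm in Hlow.
  assert (H9: (2 * A)^2 <= (sqrt (4 * A^2 - 3 * eps))^2) by (apply pow_incr; lra).
  rewrite <- (Rsqr_pow2 (sqrt _)), Rsqr_sqrt in H9 by (unfold eps; nra). unfold eps in H9. nra.
Qed.


Definition sc (c : R) (x : seqY) : seqY := fun b k => c * x b k.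

Lemma maxabs_ext v w m : (forall k, (k <= m)%nat -> v k = w k) -> maxabs v m = maxabs w m.
Proof. induction m; intros H; simpl; [rewrite H; auto|]. rewrite IHm, H; auto. Qed.

Lemma bn_sc c x b : blocknorm (sc c x) b = Rabs c * blocknorm x b.
Proof. unfold blocknorm, sc. apply maxabs_scale. Qed.

Lemma subY_sc c x y : subY (sc c x) (sc c y) = sc c (subY x y).
Proof. unfold subY, sc. apply functional_extensionality; intro b; apply functional_extensionality; intro k. ring. Qed.

Lemma Q_sc K c x : Q K (sc c x) = c^2 * Q K x.
Proof. unfold Q. rewrite <- ssum_scal. apply ssum_ext; intros. rewrite bn_sc.
  rewrite Rpow_mult_distr, pow2_abs. ring. Qed.

Lemma summable_sc c x : summable x -> summable (sc c x).
Proof. intros Hs. destruct (summable_bound x Hs) as [M HM].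
  apply (sum_exists _ (c^2 * M)); [intros; apply pow2_ge_0|]. intro K.
  change (Q K (sc c x) <= c^2 * M). rewrite Q_sc. apply Rmult_le_compat_l; [apply pow2_ge_0|auto]. Qed.

Lemma inY_sc c x : inY x -> inY (sc c x).
Proof. intros Hx. split.
  - intros n k H. unfold sc. destruct Hx as [Z _]. rewrite Z; auto; ring.
  - apply summable_sc, inY_summable; auto. Qed.

Lemma normY_sc c z : summable z -> normY (sc c z) = Rabs c * normY z.
Proof. intros Hs. pose proof (Rabs_pos c). pose proof (normY_nonneg z).
  apply Rle_antisym.
  - apply normY_le; [apply summable_sc; auto|nra|]. intro K. rewrite Q_sc.
    rewrite Rpow_mult_distr, pow2_abs. apply Rmult_le_compat_l; [apply pow2_ge_0|]. apply Q_le_normY; auto.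
  - destruct (Req_dec c 0) as [->|Hc]. { rewrite Rabs_R0. rewrite Rmult_0_l. apply normY_nonneg. }
    assert (Hac: 0 < Rabs c) by (apply Rabs_pos_lt; auto).
    assert (normY z <= normY (sc c z) / Rabs c).
    { apply normY_le; auto. { pose proof (normY_nonneg (sc c z)). apply Rmult_le_pos; [lra|]. apply Rlt_le, Rinv_0_lt_compat; auto. }
      intro K. pose proof (Q_le_normY (sc c z) K (summable_sc c z Hs)). rewrite Q_sc in H1.
      rewrite <- (pow2_abs c) in H1.
      replace ((normY (sc c z) / Rabs c)^2) with (normY (sc c z)^2 / (Rabs c)^2) by (field; lra).
      apply Rmult_le_reg_l with (Rabs c ^2); [nra|]. field_simplify; [|lra]. lra. }
    apply Rmult_le_reg_r with (/ Rabs c). { apply Rinv_0_lt_compat; auto. }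
    replace (Rabs c * normY z * / Rabs c) with (normY z) by (field; lra). unfold Rdiv in H1. lra.
Qed.

Lemma dY_sc c x y : inY x -> inY y -> dY (sc c x) (sc c y) = Rabs c * dY x y.
Proof. intros Hx Hy. unfold dY. rewrite subY_sc. apply normY_sc, summable_sub; auto. Qed.

Lemma dY_refl x : inY x -> dY x x <= 0.
Proof. intros Hx. unfold dY. apply normY_le; [apply summable_sub; auto|lra|]. intro K.
  unfold Q. rewrite (ssum_ext _ (fun _ => 0)).
  { assert (ssum (fun _ => 0) K = 0) by (clear; induction K; cbn [ssum]; lra). lra. }
  intros b _. unfold blocknorm, subY. rewrite (maxabs_ext _ (fun _ => 0)). { simpl.
  assert (maxabs (fun _ => 0) b = 0). { apply Rle_antisym; [|apply maxabs_nonneg]. apply maxabs_le; intros; rewrite Rabs_R0; lra. }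
  rewrite H. ring. } intros; ring. Qed.

Lemma list_rev_ind (P : list nat -> Prop) : P [] -> (forall r n, P r -> P (r ++ [n])) -> forall r, P r.
Proof. intros H0 H1 r. rewrite <- (rev_involutive r). induction (rev r); simpl; auto. Qed.

Lemma lip_from_edges (g : vertex -> seqY) L : (forall s, inY (g s)) ->
  (forall s n, dY (g (s ++ [n])) (g s) <= L) -> forall s t, dY (g s) (g t) <= L * dT s t.
Proof. intros Hin He.
  assert (Hanc: forall r a, dY (g (a ++ r)) (g a) <= L * INR (length r)).
  { intros r; induction r as [|r n IH] using list_rev_ind; intros a.
    - rewrite app_nil_r. simpl. rewrite Rmult_0_r. apply dY_refl; auto.
    - rewrite app_assoc, length_app, plus_INR. simpl.
      eapply Rle_trans; [apply (dY_tri _ (g (a ++ r))); auto|]. specialize (IH a). specialize (He (a ++ r) n). lra. }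
  intros s t. destruct (decomp s t) as (p & s' & t' & -> & -> & H).
  rewrite dT_decomp by auto. rewrite plus_INR.
  eapply Rle_trans; [apply (dY_tri _ (g p)); auto|]. rewrite (dY_sym (g p)) by auto.
  pose proof (Hanc s' p). pose proof (Hanc t' p). lra.
Qed.

Fixpoint Phi (W : vertex -> nat -> vertex) (v : vertex) (s : vertex) : vertex :=
  match s with [] => v | n :: r => Phi W (W v n) r end.

Lemma Phi_app W s r v : Phi W v (s ++ r) = Phi W (Phi W v s) r.
Proof. revert v; induction s; simpl; auto. Qed.

Lemma Phi_shape (W : vertex -> nat -> vertex) (m' : nat)
  (HW : forall v n, exists r, W v n = v ++ n :: r /\ length r = m') a : forall v, exists psi, Phi W v a = v ++ psi /\ length psi = (S m' * length a)%nat /\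
  (a = [] -> psi = []) /\ (forall n a', a = n :: a' -> exists psi', psi = n :: psi').
Proof. induction a as [|n a IH]; intros v.
  - exists []. rewrite app_nil_r. simpl. repeat split; auto; try lia. intros; discriminate.
  - simpl. destruct (HW v n) as [r [Er Lr]]. destruct (IH (W v n)) as (psi & E & Lp & _ & _).
    exists (n :: r ++ psi). rewrite E, Er. rewrite <- app_assoc. simpl. repeat split; auto.
    + simpl. rewrite length_app. lia.
    + discriminate.
    + intros n' a' Heq. injection Heq as <- <-. eauto.
Qed.

Lemma Phi_dT (W : vertex -> nat -> vertex) (m' : nat)
  (HW : forall v n, exists r, W v n = v ++ n :: r /\ length r = m') s t : dT (Phi W [] s) (Phi W [] t) = INR (S m') * dT s t.
Proof. destruct (decomp s t) as (p & s' & t' & -> & -> & H).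
  rewrite !Phi_app. destruct (Phi_shape W m' HW s' (Phi W [] p)) as (p1 & E1 & L1 & N1 & C1).
  destruct (Phi_shape W m' HW t' (Phi W [] p)) as (p2 & E2 & L2 & N2 & C2).
  rewrite E1, E2, !dT_decomp.
  - rewrite L1, L2, <- mult_INR. f_equal. lia.
  - auto.
  - destruct s' as [|n1 s'']. { rewrite N1; auto. }
    destruct t' as [|n2 t'']. { rewrite N2; auto. destruct p1; auto. }
    destruct (C1 n1 s'' eq_refl) as [q1 ->]. destruct (C2 n2 t'' eq_refl) as [q2 ->].
    simpl in H |- *. destruct (Nat.eqb n1 n2); auto; discriminate.
Qed.

Lemma Phi_snoc (W : vertex -> nat -> vertex) s n : Phi W [] (s ++ [n]) = W (Phi W [] s) n.
Proof. rewrite Phi_app. reflexivity. Qed.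

Fixpoint walk (nx : vertex -> vertex -> nat) (v : vertex) (n : nat) (j : nat) : vertex :=
  match j with O => v ++ [n] | S j' => walk nx v n j' ++ [nx v (walk nx v n j')] end.

Lemma walk_shape nx v n j : exists r, walk nx v n j = v ++ n :: r /\ length r = j.
Proof. induction j; simpl.
  - exists []; auto.
  - destruct IHj as [r [E L]]. rewrite E. exists (r ++ [nx v (v ++ n :: r)]).
    rewrite <- app_assoc. simpl. rewrite length_app; simpl. split; auto. lia.
Qed.


Definition Emb A B := exists f : vertex -> seqY, (forall s, inY (f s)) /\
  forall s t, A * dT s t <= dY (f s) (f t) <= B * dT s t.

Lemma improve A B : 0 < A -> Emb A B -> exists B', Emb A B' /\ B'^2 <= B^2 - A^2/2.
Proof.
  intros HA [f [Hin Hf]].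
  assert (HAB: A <= B). { destruct (Hf ([0%nat]) []) as [H1 H2]. pose proof (dT_child [] 0%nat) as E; simpl in E; rewrite E in *. lra. }
  set (eps := A^2/8).
  set (b2 := B^2 - A^2 + eps).
  assert (Hb2: 0 <= b2) by (unfold b2, eps; nra).
  set (beta := sqrt b2). assert (Hbeta: 0 <= beta) by apply sqrt_pos.
  assert (Ebeta: beta^2 = b2) by (unfold beta; rewrite <- Rsqr_pow2, Rsqr_sqrt; auto).
  set (C := B + 1). assert (HC: 0 < C) by (unfold C; lra).
  assert (Hspec: forall v u, exists c, exists N, (forall K, Qr N K (subY (f u) (f v)) <= 1) /\
      Q N (subY (f (u ++ [c])) (f u)) <= beta^2).
  { intros v u. destruct (tail_small (subY (f u) (f v)) 1 (summable_sub _ _ (Hin u) (Hin v)) Rlt_0_1) as [N HN].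
    destruct (head_lemma f A B HA Hin Hf u N) as [c Hc]. exists c, N. split; auto. rewrite Ebeta. unfold b2, eps. exact Hc. }
  set (nx := fun v u => proj1_sig (constructive_indefinite_description _ (Hspec v u))).
  assert (Hnx: forall v u, exists N, (forall K, Qr N K (subY (f u) (f v)) <= 1) /\
      Q N (subY (f (u ++ [nx v u])) (f u)) <= beta^2).
  { intros v u. unfold nx. destruct (constructive_indefinite_description _ (Hspec v u)) as [c Hc]. simpl. exact Hc. }
  assert (Hinv: forall v n j, dY (f (walk nx v n j)) (f v) <= INR (S j) * beta + C * sqrt (INR (S j))).
  { intros v n j. induction j.
    - simpl walk. destruct (Hf (v ++ [n]) v) as [_ H]. rewrite dT_child in H.
      replace (INR 1) with 1 by reflexivity. rewrite sqrt_1. unfold C. lra.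
    - cbn [walk]. set (u := walk nx v n j) in *. destruct (Hnx v u) as [N [HT HH]].
      set (a := INR (S j)) in *. set (s := dY (f u) (f v)) in *.
      assert (Hs0: 0 <= s) by apply normY_nonneg.
      assert (Hx: dY (f (u ++ [nx v u])) (f u) <= B) by (destruct (Hf (u ++ [nx v u]) u) as [_ H]; rewrite dT_child in H; lra).
      assert (Ha: 0 <= a) by apply pos_INR.
      assert (Ea: INR (S (S j)) = a + 1) by (unfold a; rewrite (S_INR (S j)); ring).
      rewrite Ea.
      set (ra := sqrt a) in *. set (rb := sqrt (a+1)).
      assert (Hra: 0 <= ra) by apply sqrt_pos.
      assert (Hrab: ra <= rb) by (apply sqrt_le_1_alt; lra).
      assert (Era: ra^2 = a) by (unfold ra; rewrite <- Rsqr_pow2, Rsqr_sqrt; auto).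
      assert (Erb: rb^2 = a + 1) by (unfold rb; rewrite <- Rsqr_pow2, Rsqr_sqrt; lra).
      assert (Hfin: (beta + s)^2 + C^2 <= ((a+1)*beta + C*rb)^2).
      { assert (beta + s <= (a+1)*beta + C*ra) by lra.
        assert ((beta + s)^2 <= ((a+1)*beta + C*ra)^2) by (apply pow_incr; lra).
        assert (((a+1)*beta + C*ra)^2 + C^2 <= ((a+1)*beta + C*rb)^2).
        { replace (((a+1)*beta + C*ra)^2) with ((a+1)^2*beta^2 + 2*((a+1)*beta*C)*ra + C^2 * ra^2) by ring.
          replace (((a+1)*beta + C*rb)^2) with ((a+1)^2*beta^2 + 2*((a+1)*beta*C)*rb + C^2 * rb^2) by ring.
          rewrite Era, Erb. assert (0 <= (a+1)*beta*C) by (apply Rmult_le_pos; [apply Rmult_le_pos|]; lra). nra. }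
        lra. }
      assert (HX0: 0 <= (a+1)*beta + C*rb).
      { assert (0 <= C*rb) by (apply Rmult_le_pos; [lra|apply sqrt_pos]).
        assert (0 <= (a+1)*beta) by (apply Rmult_le_pos; lra). lra. }
      unfold dY. apply normY_le; [apply summable_sub; auto|auto|].
      intro K. set (K' := Nat.max K N).
      apply Rle_trans with (Q K' (subY (f (u ++ [nx v u])) (f v))); [apply Q_mono; lia|].
      rewrite (Q_split N K') by lia.
      pose proof (Q_tri N (f (u ++ [nx v u])) (f u) (f v)) as T1.
      pose proof (Qr_tri N K' (f (u ++ [nx v u])) (f u) (f v)) as T2.
      assert (S1: sqrt (Q N (subY (f (u ++ [nx v u])) (f u))) <= beta) by (apply sqrt_le_sq; auto).
      assert (S2: sqrt (Q N (subY (f u) (f v))) <= s) by (apply sqrtQ_le_normY, summable_sub; auto).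
      assert (S3: sqrt (Qr N K' (subY (f (u ++ [nx v u])) (f u))) <= B).
      { apply sqrt_le_sq; [lra|]. eapply Rle_trans; [apply Qr_le_Q; lia|].
        eapply Rle_trans; [apply Q_le_normY, summable_sub; auto|].
        apply pow_incr; split; [apply normY_nonneg|exact Hx]. }
      assert (S4: sqrt (Qr N K' (subY (f u) (f v))) <= 1).
      { apply sqrt_le_sq; [lra|]. replace (1^2) with 1 by ring. apply HT. }
      pose proof (sqrt_pos (Q N (subY (f (u ++ [nx v u])) (f u)))).
      pose proof (sqrt_pos (Q N (subY (f u) (f v)))).
      pose proof (sqrt_pos (Qr N K' (subY (f (u ++ [nx v u])) (f u)))).
      pose proof (sqrt_pos (Qr N K' (subY (f u) (f v)))).
      assert (U1: (sqrt (Q N (subY (f (u ++ [nx v u])) (f u))) + sqrt (Q N (subY (f u) (f v))))^2 <= (beta + s)^2)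
        by (apply pow_incr; lra).
      assert (U2: (sqrt (Qr N K' (subY (f (u ++ [nx v u])) (f u))) + sqrt (Qr N K' (subY (f u) (f v))))^2 <= C^2)
        by (apply pow_incr; unfold C; lra).
      lra. }
  set (D := 2*beta*C + C^2).
  destruct (INR_unbounded ((4*D/A^2)^2)) as [m' Hm'].
  set (mR := INR (S m')). set (q := sqrt mR).
  assert (EmR: mR = INR m' + 1) by (unfold mR; apply S_INR).
  assert (HmR: 1 <= mR) by (pose proof (pos_INR m'); lra).
  assert (Eq: q^2 = mR) by (unfold q; rewrite <- Rsqr_pow2, Rsqr_sqrt; lra).
  assert (Hq0: 0 <= q) by apply sqrt_pos.
  assert (Hq1: 1 <= q) by nra.
  assert (HD: 0 <= D) by (unfold D; nra).
  assert (Hq: 4*D/A^2 < q).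
  { destruct (Rle_or_lt q (4*D/A^2)) as [Hle|]; auto. exfalso.
    assert (0 <= 4*D/A^2) by (apply Rmult_le_pos; [lra|apply Rlt_le, Rinv_0_lt_compat; nra]).
    assert (q^2 <= (4*D/A^2)^2) by (apply pow_incr; lra). lra. }
  assert (HqD: 4*D < A^2 * q).
  { apply Rmult_lt_compat_r with (r := A^2) in Hq; [|nra]. unfold Rdiv in Hq.
    rewrite Rmult_assoc, Rinv_l in Hq by nra. lra. }
  set (tt := / q).
  assert (Htt: q * tt = 1) by (unfold tt; field; lra).
  assert (Htt0: 0 < tt) by (unfold tt; apply Rinv_0_lt_compat; lra).
  assert (Htt1: tt <= 1) by nra.
  set (W := fun v n => walk nx v n m').
  assert (HW: forall v n, exists r, W v n = v ++ n :: r /\ length r = m') by (intros; apply walk_shape).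
  set (G := fun s => sc (/ mR) (f (Phi W [] s))).
  assert (HmR0: 0 < mR) by lra.
  assert (Habs: Rabs (/ mR) = / mR) by (apply Rabs_right; apply Rle_ge, Rlt_le, Rinv_0_lt_compat; auto).
  exists (beta + C * tt). split.
  - exists G. split; [intros; apply inY_sc; auto|]. intros s t. split.
    + unfold G. rewrite dY_sc by auto. rewrite Habs.
      destruct (Hf (Phi W [] s) (Phi W [] t)) as [H1 _]. rewrite (Phi_dT W m' HW) in H1. fold mR in H1.
      apply Rmult_le_reg_l with mR; auto.
      replace (mR * (/ mR * dY (f (Phi W [] s)) (f (Phi W [] t)))) with (dY (f (Phi W [] s)) (f (Phi W [] t))) by (field; lra). lra.
    + apply lip_from_edges; [intros; apply inY_sc; auto|]. intros s0 n. unfold G.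
      rewrite dY_sc by auto. rewrite Habs. rewrite (Phi_snoc W). unfold W at 1.
      pose proof (Hinv (Phi W [] s0) n m') as Hi. fold mR in Hi. fold q in Hi.
      apply Rmult_le_reg_l with mR; auto.
      match goal with |- _ <= ?R => replace R with (mR * (beta + C * tt)) by reflexivity end.
      match goal with |- mR * (/ mR * ?Y) <= _ => replace (mR * (/ mR * Y)) with Y by (field; lra) end.
      replace (mR * (beta + C * tt)) with (mR * beta + C * (q * q * tt)) by (rewrite <- Eq; ring).
      replace (q * q * tt) with q by (rewrite Rmult_assoc, Htt; ring). lra.
  - replace ((beta + C*tt)^2) with (beta^2 + 2*beta*C*tt + C^2*(tt*tt)) by ring.
    assert (C^2 * (tt*tt) <= C^2 * tt) by (apply Rmult_le_compat_l; nra).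
    assert (D * tt < A^2/4) by nra.
    assert (2*beta*C*tt + C^2*tt = D * tt) by (unfold D; ring).
    rewrite Ebeta. unfold b2, eps in *. clear -H H0 H1. clearbody D tt C beta. pose proof (pow2_ge_0 A). lra.
Qed.

Lemma iterate A : 0 < A -> forall k B, Emb A B -> exists B', Emb A B' /\ B'^2 <= B^2 - INR k * (A^2/2).
Proof. intros HA k; induction k; intros B HB.
  - exists B; split; auto. simpl; lra.
  - destruct (IHk B HB) as [B1 [H1 E1]]. destruct (improve A B1 HA H1) as [B2 [H2 E2]].
    exists B2; split; auto. rewrite S_INR. lra.
Qed.

Theorem no_embed : ~ biLip_embeds_tree_in_Y.
Proof. intros (f & A & B & HA & HB & Hin & Hf).
  destruct (INR_unbounded (B^2 / (A^2/2))) as [k Hk].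
  destruct (iterate A HA k B (ex_intro _ f (conj Hin Hf))) as [B' [_ E]].
  assert (0 < A^2/2) by nra.
  assert (B^2 < INR k * (A^2/2)).
  { apply Rmult_lt_compat_r with (r := A^2/2) in Hk; auto. unfold Rdiv at 1 in Hk.
    rewrite Rmult_assoc, Rinv_l in Hk by lra. lra. }
  pose proof (pow2_ge_0 B'). lra.
Qed.

Theorem mainTheorem8 :
  (forall F : list vertex,
      (exists s t, In s F /\ In t F /\ s <> t) -> cY_is F 1) /\
  (exists lambda : R, 1 <= lambda /\
      forall (F : list vertex) (c : R),
        (exists s t, In s F /\ In t F /\ s <> t) -> cY_is F c -> c <= lambda) /\
  ~ biLip_embeds_tree_in_Y.
Proof.
  split; [exact part1|]. split; [|exact no_embed].
  exists 1. split; [lra|]. intros F c Hne Hc.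
  destruct (part1 F Hne) as [_ H1]. apply H1. destruct Hc as [Hc _]. exact Hc.
Qed.
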